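(* The Dehn function of $K=\ker\big(\psi\colon F_2^{(a)}\times F_2^{(b)}\times F_2^{(c)}\to\mathbb Z^2\big)$ satisfies $\delta_K(N)\succcurlyeq N^4$.
   Context: $F_2^{(a)},F_2^{(b)},F_2^{(c)}$ are free groups with bases $a_1,a_2$; $b_1,b_2$; $c_1,c_2$, and $\psi$ sends $a_i,b_i,c_i$ to the $i$-th standard basis vector $e_i$; $K$ is finitely presented. The Dehn function of a finitely presented $G=\langle S\mid\mathcal R\rangle$ is $\delta_G(N)=\max\{\mathrm{Area}(w):|w|\le N,\ w=_G1\}$, where $\mathrm{Area}(w)$ is the least number of conjugates of elements of $\mathcal R^{\pm1}$ whose product is $w$ in $F(S)$. For $f,g\colon\mathbb N\to\mathbb N$, $g\succcurlyeq f$ means $f(N)\le Cg(CN+C)+CN+C$ for some $C>0$. *)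

(* Defs.v *)
From mathcomp Require Import all_boot.
From Stdlib Require Import ClassicalEpsilon.
Set Implicit Arguments. Unset Strict Implicit. Unset Printing Implicit Defensive.

(* A letter over an alphabet A is (a, b): b = false means a, b = true means a^-1. *)
Definition word (A : eqType) := seq (A * bool).

Definition linv (A : eqType) (x : A * bool) : A * bool := (x.1, ~~ x.2).

Definition winv (A : eqType) (w : word A) : word A := rev (map (@linv A) w).

Fixpoint freduce (A : eqType) (w : word A) : word A :=
  match w with
  | [::] => [::]
  | x :: w' =>
      match freduce w' with
      | y :: w'' => if y == linv x then w'' else x :: y :: w''
      | [::] => [:: x]
      end
  end.

Definition feq (A : eqType) (u v : word A) : Prop := freduce u = freduce v.

(* A generator (i, j) : 'I_3 * 'I_2 is the j-th basis element of the i-th free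
   factor (i = 0,1,2 for a,b,c).  Elements of G are represented by words;
   two words are equal in G iff their projections to each factor are equal
   in F_2. *)
Definition Gen := ('I_3 * 'I_2)%type.

Definition proj (i : 'I_3) (w : word Gen) : word 'I_2 :=
  [seq (l.1.2, l.2) | l <- w & l.1.1 == i].

Definition Geq (u v : word Gen) : Prop :=
  forall i : 'I_3, feq (proj i u) (proj i v).

(* psi : G -> Z^2 sends a_j, b_j, c_j to e_j; so psi(w) = 0 iff for each
   j the exponent sum of letters with index j is 0 (number of positive
   occurrences equals number of negative occurrences). *)
Definition inK (w : word Gen) : Prop :=
  forall j : 'I_2,
    count (fun l : Gen * bool => (l.1.2 == j) && ~~ l.2) w =
    count (fun l : Gen * bool => (l.1.2 == j) && l.2) w.

Definition evalw (S : finType) (gens : S -> word Gen) (u : word S) : word Gen :=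
  flatten [seq (if l.2 then winv (gens l.1) else gens l.1) | l <- u].

Definition conj_prod (S : finType) (l : seq (word S * word S * bool)) : word S :=
  flatten [seq (x.1.1 ++ (if x.2 then winv x.1.2 else x.1.2) ++ winv x.1.1) | x <- l].

Definition vk_expr (S : finType) (R : seq (word S)) (u : word S)
    (l : seq (word S * word S * bool)) : Prop :=
  all (fun x => x.1.2 \in R) l /\ feq (conj_prod l) u.

Definition null (S : finType) (R : seq (word S)) (u : word S) : Prop :=
  exists l, vk_expr R u l.

Definition presents_K (S : finType) (gens : S -> word Gen) (R : seq (word S)) : Prop :=
  [/\ forall s, inK (gens s),
      forall w, inK w -> exists u : word S, Geq (evalw gens u) w
    & forall u : word S, Geq (evalw gens u) [::] <-> null R u].

(* Area(u): least number of conjugates of relators whose product is u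
   (0 if u is not null-homotopic; never used in that case). *)
Definition Area (S : finType) (R : seq (word S)) (u : word S) : nat :=
  epsilon (inhabits 0%N)
    (fun n => (exists l, vk_expr R u l /\ size l = n) /\
              forall l, vk_expr R u l -> n <= size l).

Definition Dehn (S : finType) (R : seq (word S)) (N : nat) : nat :=
  epsilon (inhabits 0%N)
    (fun d => (exists w : word S, size w <= N /\ null R w /\ Area R w = d) /\
              forall w : word S, size w <= N -> null R w -> Area R w <= d).

Definition dominates (g f : nat -> nat) : Prop :=
  exists C : nat, 0 < C /\ forall N, f N <= C * g (C * N + C) + C * N + C.

(* Main.v *)
Require Import Defs.
From Stdlib Require Import ZArith Lia ClassicalEpsilon Classical.
From mathcomp Require Import all_boot.
From mathcomp Require Import zify.
Set Implicit Arguments. Unset Strict Implicit. Unset Printing Implicit Defensive.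

Definition fstep (A : eqType) (x : A * bool) (r : word A) : word A :=
  match r with
  | y :: r' => if y == linv x then r' else x :: y :: r'
  | [::] => [:: x]
  end.

Lemma freduce_cons (A : eqType) (x : A * bool) w : freduce (x :: w) = fstep x (freduce w).
Proof. by []. Qed.

Lemma linvK (A : eqType) (x : A * bool) : linv (linv x) = x.
Proof. by case: x => a b; rewrite /linv /= negbK. Qed.

Fixpoint reduced (A : eqType) (w : word A) : bool :=
  match w with
  | x :: ((y :: _) as w') => (y != linv x) && reduced w'
  | _ => true
  end.

Lemma reduced_tail (A : eqType) (x : A * bool) w : reduced (x :: w) -> reduced w.
Proof. by case: w => //= y w /andP[]. Qed.

Lemma fstep_reduced (A : eqType) (x : A * bool) r : reduced r -> reduced (fstep x r).
Proof.
case: r => [|y r] //= Hr.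
case: ifP => Hy; first exact: reduced_tail Hr.
by rewrite /= Hy.
Qed.

Lemma freduce_reduced (A : eqType) (w : word A) : reduced (freduce w).
Proof. elim: w => [|x w IH] //=; exact: (fstep_reduced x IH). Qed.

Lemma freduce_id (A : eqType) (w : word A) : reduced w -> freduce w = w.
Proof.
elim: w => [|x w IH] // Hw.
rewrite freduce_cons IH; last exact: reduced_tail Hw.
case: w Hw {IH} => [|y w] //= /andP[Hy _].
by rewrite (negbTE Hy).
Qed.

Lemma fstep_cancel (A : eqType) (x : A * bool) s :
  reduced s -> fstep x (fstep (linv x) s) = s.
Proof.
case: s => [|y s] /=; first by rewrite eqxx.
rewrite linvK; case: (eqVneq y x) => [->|Hyx] Hs.
  case: s Hs => [|z s] //= /andP[Hz _].
  by rewrite (negbTE Hz).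
by rewrite /= eqxx.
Qed.

Lemma freduce_catr (A : eqType) (u v : word A) : freduce (u ++ v) = freduce (u ++ freduce v).
Proof.
elim: u => [|x u IH] /=; first by rewrite [RHS]freduce_id // freduce_reduced.
by rewrite -!/(fstep x _) IH.
Qed.

Lemma fstep_cat (A : eqType) (x : A * bool) r v :
  reduced r -> freduce (fstep x r ++ v) = fstep x (freduce (r ++ v)).
Proof.
case: r => [|y r] //= Hr.
case: ifP => // /eqP ->.
rewrite -/(fstep (linv x) _) fstep_cancel //; exact: freduce_reduced.
Qed.

Lemma freduce_catl (A : eqType) (u v : word A) : freduce (u ++ v) = freduce (freduce u ++ v).
Proof.
elim: u => [|x u IH] //=.
rewrite -!/(fstep x _) IH fstep_cat //; exact: freduce_reduced.
Qed.

Lemma fsub (A : eqType) (X u u' Y : word A) :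
  freduce u = freduce u' -> freduce (X ++ u ++ Y) = freduce (X ++ u' ++ Y).
Proof.
move=> H; rewrite freduce_catr [in RHS]freduce_catr.
by rewrite (freduce_catl u Y) H -freduce_catl.
Qed.

Lemma ftriv (A : eqType) (X t Y : word A) :
  freduce t = [::] -> freduce (X ++ t ++ Y) = freduce (X ++ Y).
Proof. by move=> H; rewrite (@fsub _ X t [::] Y). Qed.

Lemma winv_cons (A : eqType) (x : A * bool) w : winv (x :: w) = winv w ++ [:: linv x].
Proof. by rewrite /winv /= rev_cons cats1. Qed.

Lemma winv_cat (A : eqType) (u v : word A) : winv (u ++ v) = winv v ++ winv u.
Proof. by rewrite /winv map_cat rev_cat. Qed.

Lemma winvK (A : eqType) (w : word A) : winv (winv w) = w.
Proof.
rewrite /winv map_rev revK -map_comp.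
by rewrite (@eq_map _ _ _ id) ?map_id // => x /=; rewrite linvK.
Qed.

Lemma size_winv (A : eqType) (w : word A) : size (winv w) = size w.
Proof. by rewrite /winv size_rev size_map. Qed.

Lemma freduce_cancel (A : eqType) (w : word A) : freduce (w ++ winv w) = [::].
Proof.
elim: w => [|x w IH] //.
rewrite winv_cons /= -/(fstep x _) catA freduce_catl IH /=.
by rewrite eqxx.
Qed.

Lemma freduce_cancel' (A : eqType) (w : word A) : freduce (winv w ++ w) = [::].
Proof. by rewrite -{2}(winvK w) freduce_cancel. Qed.

Lemma feq_winv (A : eqType) (u v : word A) :
  freduce u = freduce v -> freduce (winv u) = freduce (winv v).
Proof.
move=> H.
have E1 : freduce (winv u) = freduce (winv u ++ v ++ winv v).
  by rewrite -[in LHS](cats0 (winv u)) -(@ftriv _ (winv u) (v ++ winv v) [::]) ?cats0 // freduce_cancel.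
rewrite E1 (@fsub _ (winv u) v u (winv v)) //.
by rewrite catA (@ftriv _ [::] (winv u ++ u)) // freduce_cancel'.
Qed.

Definition ftrivw (A : eqType) (w : word A) := freduce w = [::].

Lemma ftriv_cat (A : eqType) (u v : word A) : ftrivw u -> ftrivw v -> ftrivw (u ++ v).
Proof.
by move=> Hu Hv; rewrite /ftrivw -[u ++ v]cat0s (@ftriv _ [::] u v) //.
Qed.

Lemma ftriv_winv (A : eqType) (u : word A) : ftrivw u -> ftrivw (winv u).
Proof. by move=> Hu; rewrite /ftrivw (@feq_winv _ u [::]). Qed.

Definition wcomm (A : eqType) (u v : word A) := u ++ v ++ winv u ++ winv v.

Lemma ftriv_comm_l (A : eqType) (u v : word A) : ftrivw u -> ftrivw (wcomm u v).
Proof.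
move=> Hu; rewrite /ftrivw /wcomm -[u ++ _]cat0s ftriv //= .
rewrite (@ftriv _ v (winv u) (winv v)) ?freduce_cancel //; exact: ftriv_winv.
Qed.

Lemma ftriv_comm_r (A : eqType) (u v : word A) : ftrivw v -> ftrivw (wcomm u v).
Proof.
move=> Hv; rewrite /ftrivw /wcomm (@ftriv _ u v _).
rewrite catA -[_ ++ winv v]cats0 -catA (@ftriv _ (u ++ winv u) (winv v) [::]) ?cats0 ?freduce_cancel //.
exact: ftriv_winv.
exact: Hv.
Qed.

Lemma feq_cat (A : eqType) (u u' v v' : word A) :
  freduce u = freduce u' -> freduce v = freduce v' -> freduce (u ++ v) = freduce (u' ++ v').
Proof.
move=> Hu Hv; rewrite -[u ++ v]cat0s -[v]cats0 (fsub _ _ Hu) /= cats0.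
by rewrite freduce_catr Hv -freduce_catr.
Qed.

Lemma ftriv_sub (A : eqType) (X u u' : word A) :
  freduce u = freduce u' -> ftrivw (wcomm X u ++ winv (wcomm X u')).
Proof.
move=> H; rewrite /ftrivw.
have -> : freduce (wcomm X u ++ winv (wcomm X u')) = freduce (wcomm X u ++ winv (wcomm X u)).
  apply: feq_cat => //; apply: feq_winv; rewrite /wcomm.
  apply: feq_cat => //; apply: feq_cat => //; apply: feq_cat => //; exact: feq_winv.
exact: freduce_cancel.
Qed.

Lemma fold_freduce (A : eqType) (T : Type) (mul : T -> T -> T) (one : T)
  (f : A * bool -> T)
  (assoc : forall a b c, mul a (mul b c) = mul (mul a b) c)
  (idl : forall a, mul one a = a)
  (canc : forall x, mul (f x) (f (linv x)) = one) (w : word A) :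
  foldr (fun x acc => mul (f x) acc) one (freduce w) = foldr (fun x acc => mul (f x) acc) one w.
Proof.
elim: w => [|x w IH] //=.
rewrite -IH; case: (freduce w) => [|y r] //=.
case: ifP => // /eqP ->.
by rewrite assoc canc idl.
Qed.

Lemma fold_cat (A : eqType) (T : Type) (mul : T -> T -> T) (one : T)
  (f : A * bool -> T)
  (assoc : forall a b c, mul a (mul b c) = mul (mul a b) c)
  (idl : forall a, mul one a = a) (u v : word A) :
  foldr (fun x acc => mul (f x) acc) one (u ++ v) =
  mul (foldr (fun x acc => mul (f x) acc) one u) (foldr (fun x acc => mul (f x) acc) one v).
Proof. by elim: u => [|x u IH] /=; rewrite ?idl // IH assoc. Qed.

Lemma fold_winv (A : eqType) (T : Type) (mul : T -> T -> T) (one : T) (inv : T -> T)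
  (f : A * bool -> T)
  (assoc : forall a b c, mul a (mul b c) = mul (mul a b) c)
  (idl : forall a, mul one a = a) (idr : forall a, mul a one = a)
  (invM : forall a b, inv (mul a b) = mul (inv b) (inv a)) (inv1 : inv one = one)
  (finv : forall x, f (linv x) = inv (f x)) (w : word A) :
  foldr (fun x acc => mul (f x) acc) one (winv w) = inv (foldr (fun x acc => mul (f x) acc) one w).
Proof.
elim: w => [|x w IH]; first by rewrite /= inv1.
rewrite winv_cons (@fold_cat A T mul one f assoc idl) /= IH idr finv.
by rewrite invM.
Qed.

Open Scope Z_scope.

Record N3 := mkN { x1 : Z; x2 : Z; zZ : Z; t1 : Z; t2 : Z }.
Definition mulN (g h : N3) : N3 :=
  let cr := x1 g * x2 h - x2 g * x1 h in
  mkN (x1 g + x1 h) (x2 g + x2 h) (zZ g + zZ h + cr)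
      (t1 g + t1 h + 3 * (x1 g * zZ h - zZ g * x1 h) + (x1 g - x1 h) * cr)
      (t2 g + t2 h + 3 * (x2 g * zZ h - zZ g * x2 h) + (x2 g - x2 h) * cr).
Definition invN (g : N3) : N3 := mkN (- x1 g) (- x2 g) (- zZ g) (- t1 g) (- t2 g).
Definition oneN := mkN 0 0 0 0 0.

Lemma mkN_eq (a0 b0 : Z) (a1 b1 : Z) (a2 b2 : Z) (a3 b3 : Z) (a4 b4 : Z) : a0 = b0 -> a1 = b1 -> a2 = b2 -> a3 = b3 -> a4 = b4 -> mkN a0 a1 a2 a3 a4 = mkN b0 b1 b2 b3 b4.
Proof. intros; subst; reflexivity. Qed.
Lemma pair_eq2 (A B : Type) (a a' : A) (b b' : B) : a = a' -> b = b' -> (a, b) = (a', b').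
Proof. by move=> -> ->. Qed.
Ltac crush_N := cbv [mulN invN oneN x1 x2 zZ t1 t2]; apply mkN_eq; ring.

Lemma mulN_assoc g h k : mulN g (mulN h k) = mulN (mulN g h) k.
Proof. destruct g, h, k; crush_N. Qed.
Lemma mulN_1l g : mulN oneN g = g.
Proof. destruct g; crush_N. Qed.
Lemma mulN_1r g : mulN g oneN = g.
Proof. destruct g; crush_N. Qed.
Lemma mulN_invl g : mulN (invN g) g = oneN.
Proof. destruct g; crush_N. Qed.
Lemma mulN_invr g : mulN g (invN g) = oneN.
Proof. destruct g; crush_N. Qed.
Lemma invN_mul g h : invN (mulN g h) = mulN (invN h) (invN g).
Proof. destruct g, h; crush_N. Qed.
Lemma invN1 : invN oneN = oneN.
Proof. crush_N. Qed.

Record Q13 := mkQ { ax1 : Z; ax2 : Z; aZ : Z; aT1 : Z; aT2 : Z;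
                    bx1 : Z; bx2 : Z; bZ : Z; bT1 : Z; bT2 : Z;
                    cZ : Z; cT1 : Z; cT2 : Z }.
Definition cx1 g := - (ax1 g + bx1 g).
Definition cx2 g := - (ax2 g + bx2 g).
Definition omega (g h : Q13) : Z :=
  (1) * (ax1 g) * (aT2 h)
  + (-2) * (ax1 g) * (ax1 h) * (ax2 h) * (bx2 h)
  + (-4) * (ax1 g) * (ax1 h) * (bx2 h) * (bx2 h)
  + (2) * (ax1 g) * (ax2 h) * (ax2 h) * (bx1 h)
  + (-3) * (ax1 g) * (ax2 h) * (aZ h)
  + (-2) * (ax1 g) * (ax2 h) * (bx1 h) * (bx2 h)
  + (3) * (ax1 g) * (ax2 h) * (cZ h)
  + (-1) * (ax1 g) * (bT2 h)
  + (-2) * (ax1 g) * (bx1 h) * (bx2 h) * (bx2 h)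
  + (3) * (ax1 g) * (bx2 h) * (bZ h)
  + (-3) * (ax1 g) * (bx2 h) * (cZ h)
  + (1) * (ax1 g) * (cT2 h)
  + (-3) * (ax1 g) * (ax1 g) * (bx2 h) * (bx2 h)
  + (-6) * (ax1 g) * (ax1 g) * (bx2 g) * (ax2 h)
  + (-6) * (ax1 g) * (ax1 g) * (bx2 g) * (bx2 h)
  + (6) * (ax1 g) * (ax2 g) * (bx1 g) * (ax2 h)
  + (-6) * (ax1 g) * (aZ g) * (ax2 h)
  + (6) * (ax1 g) * (bx1 g) * (ax2 h) * (ax2 h)
  + (-6) * (ax1 g) * (bx1 g) * (bx2 g) * (ax2 h)
  + (-6) * (ax1 g) * (bx1 g) * (bx2 g) * (bx2 h)
  + (-9) * (ax1 g) * (bx2 g) * (ax1 h) * (ax2 h)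
  + (-6) * (ax1 g) * (bx2 g) * (ax1 h) * (bx2 h)
  + (-6) * (ax1 g) * (bx2 g) * (ax2 h) * (bx1 h)
  + (-3) * (ax1 g) * (bx2 g) * (aZ h)
  + (-6) * (ax1 g) * (bx2 g) * (bx1 h) * (bx2 h)
  + (-6) * (ax1 g) * (bx2 g) * (cZ h)
  + (6) * (ax1 g) * (bZ g) * (bx2 h)
  + (6) * (ax1 g) * (cZ g) * (ax2 h)
  + (1) * (ax2 g) * (bT1 h)
  + (2) * (ax2 g) * (bx1 h) * (bx1 h) * (bx2 h)
  + (3) * (ax2 g) * (bx1 h) * (bZ h)
  + (3) * (ax2 g) * (bx1 g) * (ax1 h) * (ax2 h)
  + (3) * (ax2 g) * (bx1 g) * (aZ h)
  + (6) * (ax2 g) * (bx1 g) * (bx1 h) * (bx2 h)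
  + (6) * (ax2 g) * (bx1 g) * (bZ h)
  + (6) * (ax2 g) * (bx1 g) * (bx1 g) * (bx2 h)
  + (-3) * (aZ g) * (ax1 h) * (ax2 h)
  + (-3) * (aZ g) * (aZ h)
  + (1) * (bx1 g) * (aT2 h)
  + (4) * (bx1 g) * (ax1 h) * (ax2 h) * (ax2 h)
  + (3) * (bx1 g) * (ax2 h) * (aZ h)
  + (6) * (bx1 g) * (ax2 h) * (bx1 h) * (bx2 h)
  + (6) * (bx1 g) * (ax2 h) * (bZ h)
  + (6) * (bx1 g) * (bx1 g) * (ax2 h) * (bx2 h)
  + (-3) * (bx1 g) * (bx2 g) * (ax1 h) * (ax2 h)
  + (-3) * (bx1 g) * (bx2 g) * (ax1 h) * (bx2 h)
  + (-3) * (bx1 g) * (bx2 g) * (ax2 h) * (bx1 h)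
  + (3) * (bx1 g) * (bx2 g) * (bZ h)
  + (-3) * (bx1 g) * (bx2 g) * (cZ h)
  + (6) * (bx1 g) * (bZ g) * (ax2 h)
  + (-1) * (bx2 g) * (aT1 h)
  + (-4) * (bx2 g) * (ax1 h) * (ax1 h) * (ax2 h)
  + (-2) * (bx2 g) * (ax1 h) * (ax1 h) * (bx2 h)
  + (-4) * (bx2 g) * (ax1 h) * (ax2 h) * (bx1 h)
  + (-3) * (bx2 g) * (ax1 h) * (aZ h)
  + (-4) * (bx2 g) * (ax1 h) * (bx1 h) * (bx2 h)
  + (-3) * (bx2 g) * (ax1 h) * (cZ h)
  + (-2) * (bx2 g) * (ax2 h) * (bx1 h) * (bx1 h)
  + (1) * (bx2 g) * (bT1 h)
  + (3) * (bx2 g) * (bx1 h) * (bZ h)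
  + (-3) * (bx2 g) * (bx1 h) * (cZ h)
  + (1) * (bx2 g) * (cT1 h)
  + (3) * (bZ g) * (ax1 h) * (bx2 h)
  + (3) * (bZ g) * (ax2 h) * (bx1 h)
  + (-3) * (bZ g) * (aZ h)
  + (-3) * (bZ g) * (bZ h)
  + (3) * (bZ g) * (cZ h)
  + (3) * (cZ g) * (ax1 h) * (ax2 h)
  + (3) * (cZ g) * (aZ h).

Definition mulQ (g h : Q13) : Q13 :=
  let A := mulN (mkN (ax1 g) (ax2 g) (aZ g) (aT1 g) (aT2 g)) (mkN (ax1 h) (ax2 h) (aZ h) (aT1 h) (aT2 h)) in
  let B := mulN (mkN (bx1 g) (bx2 g) (bZ g) (bT1 g) (bT2 g)) (mkN (bx1 h) (bx2 h) (bZ h) (bT1 h) (bT2 h)) in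
  let C := mulN (mkN (cx1 g) (cx2 g) (cZ g) (cT1 g) (cT2 g)) (mkN (cx1 h) (cx2 h) (cZ h) (cT1 h) (cT2 h)) in
  mkQ (x1 A) (x2 A) (zZ A) (t1 A) (t2 A) (x1 B) (x2 B) (zZ B) (t1 B) (t2 B) (zZ C) (t1 C) (t2 C).
Definition negQ (g : Q13) : Q13 :=
  mkQ (- ax1 g) (- ax2 g) (- aZ g) (- aT1 g) (- aT2 g) (- bx1 g) (- bx2 g) (- bZ g) (- bT1 g) (- bT2 g)
      (- cZ g) (- cT1 g) (- cT2 g).
Definition zeroQ := mkQ 0 0 0 0 0 0 0 0 0 0 0 0 0.

Lemma mkQ_eq (a0 b0 : Z) (a1 b1 : Z) (a2 b2 : Z) (a3 b3 : Z) (a4 b4 : Z) (a5 b5 : Z) (a6 b6 : Z) (a7 b7 : Z) (a8 b8 : Z) (a9 b9 : Z) (a10 b10 : Z) (a11 b11 : Z) (a12 b12 : Z) : a0 = b0 -> a1 = b1 -> a2 = b2 -> a3 = b3 -> a4 = b4 -> a5 = b5 -> a6 = b6 -> a7 = b7 -> a8 = b8 -> a9 = b9 -> a10 = b10 -> a11 = b11 -> a12 = b12 -> mkQ a0 a1 a2 a3 a4 a5 a6 a7 a8 a9 a10 a11 a12 = mkQ b0 b1 b2 b3 b4 b5 b6 b7 b8 b9 b10 b11 b12.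
Proof. intros; subst; reflexivity. Qed.
Definition E := (Q13 * Z)%type.
Definition mulE (g h : E) : E :=
  (mulQ (fst g) (fst h), snd g + snd h + omega (fst g) (fst h)).
Definition invE (g : E) : E := (negQ (fst g), - snd g - omega (fst g) (negQ (fst g))).
Definition oneE : E := (zeroQ, 0).

Ltac crush_E := cbv [mulE invE oneE mulQ negQ zeroQ omega cx1 cx2 mulN x1 x2 zZ t1 t2 ax1 ax2 aZ aT1 aT2 bx1 bx2 bZ bT1 bT2 cZ cT1 cT2 fst snd]; f_equal; try f_equal; ring.

Ltac crush_Q := cbv [mulQ negQ zeroQ cx1 cx2 mulN x1 x2 zZ t1 t2 ax1 ax2 aZ aT1 aT2 bx1 bx2 bZ bT1 bT2 cZ cT1 cT2]; apply mkQ_eq; ring.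

Lemma omega0l g : omega zeroQ g = 0.
Proof. Time (destruct g; cbv [omega zeroQ ax1 ax2 aZ aT1 aT2 bx1 bx2 bZ bT1 bT2 cZ cT1 cT2]; ring). Qed.
Lemma omega0r g : omega g zeroQ = 0.
Proof. Time (destruct g; cbv [omega zeroQ ax1 ax2 aZ aT1 aT2 bx1 bx2 bZ bT1 bT2 cZ cT1 cT2]; ring). Qed.
Lemma mulQ0l g : mulQ zeroQ g = g.
Proof. Time (destruct g; crush_Q). Qed.
Lemma mulQ0r g : mulQ g zeroQ = g.
Proof. Time (destruct g; crush_Q). Qed.
Lemma mulQ_neg g : mulQ g (negQ g) = zeroQ.
Proof. Time (destruct g; crush_Q). Qed.

Lemma mulE_def g s h t : mulE (g, s) (h, t) = (mulQ g h, s + t + omega g h).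
Proof. reflexivity. Qed.
Lemma invE_def g s : invE (g, s) = (negQ g, - s - omega g (negQ g)).
Proof. reflexivity. Qed.
Lemma mulE_1l g : mulE oneE g = g.
Proof. destruct g as [g s]; rewrite /oneE mulE_def omega0l mulQ0l; apply: pair_eq2; [reflexivity | ring]. Qed.
Lemma mulE_1r g : mulE g oneE = g.
Proof. destruct g as [g s]; rewrite /oneE mulE_def omega0r mulQ0r; apply: pair_eq2; [reflexivity | ring]. Qed.
Lemma mulE_invr g : mulE g (invE g) = oneE.
Proof. destruct g as [g s]; rewrite invE_def mulE_def mulQ_neg /oneE; apply: pair_eq2; [reflexivity | generalize (omega g (negQ g)) => w; ring]. Qed.

Lemma mulQ_assoc g h k : mulQ g (mulQ h k) = mulQ (mulQ g h) k.
Proof. destruct g, h, k; crush_Q. Qed.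

Lemma omega_cocycle g h k : omega g h + omega (mulQ g h) k = omega h k + omega g (mulQ h k).
Proof. destruct g, h, k; cbv [mulQ omega cx1 cx2 mulN x1 x2 zZ t1 t2 ax1 ax2 aZ aT1 aT2 bx1 bx2 bZ bT1 bT2 cZ cT1 cT2]; ring. Qed.

Lemma mulE_assoc a b c : mulE a (mulE b c) = mulE (mulE a b) c.
Proof.
destruct a as [g s], b as [h t], c as [k u]; rewrite !mulE_def mulQ_assoc.
apply: pair_eq2; first reflexivity.
have := omega_cocycle g h k.
generalize (omega g h) (omega (mulQ g h) k) (omega h k) (omega g (mulQ h k)) => w1 w2 w3 w4.
lia.
Qed.

Lemma mulE_invl g : mulE (invE g) g = oneE.
Proof.
rewrite -[mulE (invE g) g]mulE_1r -(mulE_invr (invE g)) mulE_assoc.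
by rewrite -(mulE_assoc (invE g) g (invE g)) mulE_invr mulE_1r mulE_invr.
Qed.

Lemma invE_unique g h : mulE g h = oneE -> h = invE g.
Proof.
move=> H; rewrite -[h]mulE_1l -(mulE_invl g) -mulE_assoc H mulE_1r //.
Qed.

Lemma invE_mul g h : invE (mulE g h) = mulE (invE h) (invE g).
Proof.
symmetry; apply: invE_unique.
by rewrite -mulE_assoc [mulE h _]mulE_assoc mulE_invr mulE_1l mulE_invr.
Qed.

Lemma invE1 : invE oneE = oneE.
Proof. symmetry; apply: invE_unique; exact: mulE_1l. Qed.

Lemma invEK g : invE (invE g) = g.
Proof. symmetry; apply: invE_unique; exact: mulE_invl. Qed.

Lemma central_l t x : mulE (zeroQ, t) x = (fst x, t + snd x).
Proof. destruct x as [g s]; cbn [fst snd]; rewrite mulE_def omega0l mulQ0l; apply: pair_eq2; [reflexivity|ring]. Qed.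
Lemma central_r t x : mulE x (zeroQ, t) = (fst x, snd x + t).
Proof. destruct x as [g s]; cbn [fst snd]; rewrite mulE_def omega0r mulQ0r; apply: pair_eq2; [reflexivity|ring]. Qed.

Lemma conj_central t x : mulE x (mulE (zeroQ, t) (invE x)) = (zeroQ, t).
Proof.
have Hc : mulE x (zeroQ, t) = mulE (zeroQ, t) x.
  rewrite central_l central_r; apply: pair_eq2; [reflexivity|ring].
by rewrite mulE_assoc Hc -mulE_assoc mulE_invr mulE_1r.
Qed.

Lemma invE_central t : invE (zeroQ, t) = (zeroQ, - t).
Proof.
symmetry; apply: invE_unique; rewrite central_r /=; apply: pair_eq2; [reflexivity|ring].
Qed.

Lemma mul_inv_same g s s' : mulE (g, s) (invE (g, s')) = (zeroQ, s - s').
Proof.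
rewrite invE_def mulE_def mulQ_neg; apply: pair_eq2; first reflexivity.
generalize (omega g (negQ g)) => w; ring.
Qed.

Lemma commE_val p q :
  mulQ (fst p) (fst q) = mulQ (fst q) (fst p) ->
  snd (mulE p (mulE q (mulE (invE p) (invE q)))) = omega (fst p) (fst q) - omega (fst q) (fst p).
Proof.
move=> Hc.
rewrite -invE_mul !mulE_assoc.
destruct p as [g s], q as [h t]; cbn [fst snd] in Hc |- *.
rewrite (mulE_def g s h t) (mulE_def h t g s) -Hc mul_inv_same; cbn [snd].
generalize (omega g h) (omega h g) => w1 w2; ring.
Qed.

Close Scope Z_scope.

Definition i0 : 'I_3 := ord0.
Definition i1 : 'I_3 := @Ordinal 3 1 isT.
Definition i2 : 'I_3 := @Ordinal 3 2 isT.
Definition j0 : 'I_2 := ord0.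
Definition j1 : 'I_2 := @Ordinal 2 1 isT.

Definition genN (j : 'I_2) : N3 := if j == j0 then mkN 1 0 0 0 0 else mkN 0 1 0 0 0.
Definition letN (l : 'I_2 * bool) : N3 := if l.2 then invN (genN l.1) else genN l.1.
Definition rhoN (w : word 'I_2) : N3 := foldr (fun x acc => mulN (letN x) acc) oneN w.

Lemma invNK g : invN (invN g) = g.
Proof. destruct g; crush_N. Qed.

Lemma letN_canc x : mulN (letN x) (letN (linv x)) = oneN.
Proof. case: x => j [] /=; rewrite /letN /=; [exact: mulN_invl | exact: mulN_invr]. Qed.

Lemma letN_linv x : letN (linv x) = invN (letN x).
Proof. case: x => j [] /=; rewrite /letN /= ?invNK //. Qed.

Lemma rhoN_freduce w : rhoN (freduce w) = rhoN w.
Proof. apply: fold_freduce; [exact: mulN_assoc | exact: mulN_1l | exact: letN_canc]. Qed.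

Lemma rhoN_cat u v : rhoN (u ++ v) = mulN (rhoN u) (rhoN v).
Proof. apply: fold_cat; [exact: mulN_assoc | exact: mulN_1l]. Qed.

Lemma rhoN_winv w : rhoN (winv w) = invN (rhoN w).
Proof.
apply: fold_winv; [exact: mulN_assoc | exact: mulN_1l | exact: mulN_1r | exact: invN_mul | exact: invN1 | exact: letN_linv].
Qed.

Lemma rhoN_feq u v : feq u v -> rhoN u = rhoN v.
Proof. by rewrite /feq => H; rewrite -rhoN_freduce H rhoN_freduce. Qed.

Lemma proj_cat i u v : proj i (u ++ v) = proj i u ++ proj i v.
Proof. by rewrite /proj filter_cat map_cat. Qed.

Lemma proj_winv i w : proj i (winv w) = winv (proj i w).
Proof.
rewrite /proj /winv filter_rev !map_rev; congr rev.
elim: w => [|x w IH] //=; rewrite /linv /=.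
by case: ifP => _ //=; rewrite IH.
Qed.

Lemma winv_flatten (A : eqType) (s : seq (word A)) : winv (flatten s) = flatten (rev (map (@winv A) s)).
Proof.
elim: s => [|x s IH] //=.
by rewrite winv_cat IH rev_cons flatten_rcons.
Qed.

Lemma evalw_cat (S : finType) (gens : S -> word Gen) u v :
  evalw gens (u ++ v) = evalw gens u ++ evalw gens v.
Proof. by rewrite /evalw map_cat flatten_cat. Qed.

Lemma evalw_winv (S : finType) (gens : S -> word Gen) u :
  evalw gens (winv u) = winv (evalw gens u).
Proof.
rewrite /evalw winv_flatten /winv map_rev -!map_comp; congr (flatten (rev _)).
apply: eq_map => x /=; case: x => s [] //=.
exact: (esym (winvK (gens s))).
Qed.

Lemma evalw_cons (S : finType) (gens : S -> word Gen) x u :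
  evalw gens (x :: u) = (if x.2 then winv (gens x.1) else gens x.1) ++ evalw gens u.
Proof. by []. Qed.

Definition xs (j : 'I_2) (g : N3) : Z := if j == j0 then x1 g else x2 g.

Lemma xs_mul j g h : xs j (mulN g h) = (xs j g + xs j h)%Z.
Proof. by rewrite /xs; case: ifP. Qed.

Lemma ord2P (j : 'I_2) : j = j0 \/ j = j1.
Proof. case: j => [[|[|m]] Hm]; [left|right|by []]; exact: val_inj. Qed.
Lemma ord3P (i : 'I_3) : [\/ i = i0, i = i1 | i = i2].
Proof. case: i => [[|[|[|m]]] Hm]; [constructor 1|constructor 2|constructor 3|by []]; exact: val_inj. Qed.

Lemma proj_cons k (l : Gen * bool) w :
  proj k (l :: w) = if l.1.1 == k then (l.1.2, l.2) :: proj k w else proj k w.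
Proof. by rewrite /proj /=; case: ifP. Qed.
Lemma rhoN_cons x w : rhoN (x :: w) = mulN (letN x) (rhoN w).
Proof. by []. Qed.

Lemma xs_let j j' b : xs j (letN (j', b)) = if j' == j then (if b then (-1)%Z else 1%Z) else 0%Z.
Proof. by case: (ord2P j) => ->; case: (ord2P j') => ->; case: b. Qed.



Lemma constraint_count (w : word Gen) (j : 'I_2) :
  (xs j (rhoN (proj i0 w)) + xs j (rhoN (proj i1 w)) + xs j (rhoN (proj i2 w)))%Z =
  (Z.of_nat (count (fun l : Gen * bool => (l.1.2 == j) && ~~ l.2) w) -
   Z.of_nat (count (fun l : Gen * bool => (l.1.2 == j) && l.2) w))%Z.
Proof.
have e1 : (i0 == i1) = false by [].
have e2 : (i0 == i2) = false by [].
have e3 : (i1 == i0) = false by [].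
have e4 : (i1 == i2) = false by [].
have e5 : (i2 == i0) = false by [].
have e6 : (i2 == i1) = false by [].
have e7 : (j0 == j1) = false by [].
have e8 : (j1 == j0) = false by [].
have nT : ~~ true = false by [].
have nF : ~~ false = true by [].
elim: w => [|[[i j'] b] w IH]; first by case: (ord2P j) => ->.
rewrite !proj_cons /=.
case: (ord3P i) => ->; rewrite ?eqxx ?e1 ?e2 ?e3 ?e4 ?e5 ?e6 ?rhoN_cons ?xs_mul xs_let;
 case: (ord2P j) => Ej; rewrite Ej in IH *; case: (ord2P j') => ->; case: b;
  rewrite ?eqxx ?e7 ?e8 ?nT ?nF ?andTb ?andFb; lia.
Qed.


Definition piN (A B C : N3) : Q13 :=
  mkQ (x1 A) (x2 A) (zZ A) (t1 A) (t2 A) (x1 B) (x2 B) (zZ B) (t1 B) (t2 B) (zZ C) (t1 C) (t2 C).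

Lemma piN_mul A B C A' B' C' :
  x1 C = (- (x1 A + x1 B))%Z -> x2 C = (- (x2 A + x2 B))%Z ->
  x1 C' = (- (x1 A' + x1 B'))%Z -> x2 C' = (- (x2 A' + x2 B'))%Z ->
  piN (mulN A A') (mulN B B') (mulN C C') = mulQ (piN A B C) (piN A' B' C').
Proof.
case: A => p1 p2 p3 p4 p5; case: B => q1 q2 q3 q4 q5; case: C => r1 r2 r3 r4 r5;
case: A' => p1' p2' p3' p4' p5'; case: B' => q1' q2' q3' q4' q5'; case: C' => r1' r2' r3' r4' r5'.
cbn [x1 x2] => -> -> -> ->.
cbv [piN mulQ cx1 cx2 mulN x1 x2 zZ t1 t2 ax1 ax2 aZ aT1 aT2 bx1 bx2 bZ bT1 bT2 cZ cT1 cT2].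
apply mkQ_eq; ring.
Qed.

Lemma piN_inv A B C : piN (invN A) (invN B) (invN C) = negQ (piN A B C).
Proof. by []. Qed.

Definition piw (w : word Gen) : Q13 := piN (rhoN (proj i0 w)) (rhoN (proj i1 w)) (rhoN (proj i2 w)).
Definition cons (w : word Gen) : Prop :=
  x1 (rhoN (proj i2 w)) = (- (x1 (rhoN (proj i0 w)) + x1 (rhoN (proj i1 w))))%Z /\
  x2 (rhoN (proj i2 w)) = (- (x2 (rhoN (proj i0 w)) + x2 (rhoN (proj i1 w))))%Z.

Lemma inK_cons w : inK w -> cons w.
Proof.
move=> H; split.
- have := constraint_count w j0; rewrite (H j0) /xs eqxx; lia.
- have e : (j1 == j0) = false by [].
  have := constraint_count w j1; rewrite (H j1) /xs e; lia.
Qed.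

Lemma cons_cat u v : cons u -> cons v -> cons (u ++ v).
Proof. rewrite /cons !proj_cat !rhoN_cat /=; lia. Qed.

Lemma cons_winv u : cons u -> cons (winv u).
Proof. rewrite /cons !proj_winv !rhoN_winv /=; lia. Qed.

Lemma piw_cat u v : cons u -> cons v -> piw (u ++ v) = mulQ (piw u) (piw v).
Proof.
move=> [Hu1 Hu2] [Hv1 Hv2]; rewrite /piw !proj_cat !rhoN_cat piN_mul //.
Qed.

Lemma piw_winv u : piw (winv u) = negQ (piw u).
Proof. by rewrite /piw !proj_winv !rhoN_winv. Qed.

Lemma piw_Geq u v : Geq u v -> piw u = piw v.
Proof. by move=> H; rewrite /piw !(rhoN_feq (H _)). Qed.

Lemma cons_Geq u v : Geq u v -> cons u -> cons v.
Proof. by move=> H; rewrite /cons !(rhoN_feq (H _)). Qed.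

Definition liftS (S : finType) (gens : S -> word Gen) (s : S) : E := (piw (gens s), 0%Z).
Definition letE (S : finType) (gens : S -> word Gen) (l : S * bool) : E :=
  if l.2 then invE (liftS gens l.1) else liftS gens l.1.
Definition LE (S : finType) (gens : S -> word Gen) (u : word S) : E :=
  foldr (fun x acc => mulE (letE gens x) acc) oneE u.

Lemma letE_canc (S : finType) (gens : S -> word Gen) x : mulE (letE gens x) (letE gens (linv x)) = oneE.
Proof. case: x => s [] /=; rewrite /letE /=; [exact: mulE_invl | exact: mulE_invr]. Qed.

Lemma letE_linv (S : finType) (gens : S -> word Gen) x : letE gens (linv x) = invE (letE gens x).
Proof. case: x => s [] /=; rewrite /letE /= ?invEK //. Qed.

Lemma LE_freduce (S : finType) (gens : S -> word Gen) w : LE gens (freduce w) = LE gens w.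
Proof. apply: fold_freduce; [exact: mulE_assoc | exact: mulE_1l | exact: letE_canc]. Qed.

Lemma LE_cat (S : finType) (gens : S -> word Gen) u v : LE gens (u ++ v) = mulE (LE gens u) (LE gens v).
Proof. apply: fold_cat; [exact: mulE_assoc | exact: mulE_1l]. Qed.

Lemma LE_winv (S : finType) (gens : S -> word Gen) w : LE gens (winv w) = invE (LE gens w).
Proof.
apply: fold_winv; [exact: mulE_assoc | exact: mulE_1l | exact: mulE_1r | exact: invE_mul | exact: invE1 | exact: letE_linv].
Qed.

Lemma fst_mulE g h : fst (mulE g h) = mulQ (fst g) (fst h).
Proof. by []. Qed.
Lemma fst_invE g : fst (invE g) = negQ (fst g).
Proof. by []. Qed.

Lemma LE_cons (S : finType) (gens : S -> word Gen) x u : LE gens (x :: u) = mulE (letE gens x) (LE gens u).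
Proof. by []. Qed.

Lemma LE_fst (S : finType) (gens : S -> word Gen) (HK : forall s, inK (gens s)) u :
  fst (LE gens u) = piw (evalw gens u) /\ cons (evalw gens u).
Proof.
elim: u => [|x u [IH1 IH2]]; first by split.
rewrite evalw_cons LE_cons fst_mulE IH1.
have Hx : cons (if x.2 then winv (gens x.1) else gens x.1).
  case: x.2; [apply: cons_winv|]; exact: inK_cons.
split; last exact: cons_cat.
rewrite piw_cat // /letE; case: x.2 => //.
by rewrite fst_invE piw_winv.
Qed.

Close Scope Z_scope.

Definition Phi (S : finType) (gens : S -> word Gen) (i : 'I_3) (w : word S) := proj i (evalw gens w).

Lemma Phi_cat (S : finType) (gens : S -> word Gen) i u v : Phi gens i (u ++ v) = Phi gens i u ++ Phi gens i v.
Proof. by rewrite /Phi evalw_cat proj_cat. Qed.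
Lemma Phi_winv (S : finType) (gens : S -> word Gen) i u : Phi gens i (winv u) = winv (Phi gens i u).
Proof. by rewrite /Phi evalw_winv proj_winv. Qed.
Lemma Phi_comm (S : finType) (gens : S -> word Gen) i u v :
  Phi gens i (wcomm u v) = wcomm (Phi gens i u) (Phi gens i v).
Proof. by rewrite /wcomm !Phi_cat !Phi_winv. Qed.

Definition pw (A : eqType) (w : word A) (n : nat) : word A := flatten (nseq n w).
Lemma pwS (A : eqType) (w : word A) n : pw w n.+1 = w ++ pw w n.
Proof. by []. Qed.
Lemma Phi_pw (S : finType) (gens : S -> word Gen) i w n : Phi gens i (pw w n) = pw (Phi gens i w) n.
Proof. by elim: n => [|n IH] //; rewrite !pwS Phi_cat IH. Qed.
Lemma ftriv_pw (A : eqType) (w : word A) n : ftrivw w -> ftrivw (pw w n).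
Proof. by move=> H; elim: n => [|n IH] //; rewrite pwS; apply: ftriv_cat. Qed.
Lemma feq_pw (A : eqType) (u v : word A) n : freduce u = freduce v -> freduce (pw u n) = freduce (pw v n).
Proof. by move=> H; elim: n => [|n IH] //; rewrite !pwS; apply: feq_cat. Qed.
Lemma size_pw (A : eqType) (w : word A) n : size (pw w n) = n * size w.
Proof. by elim: n => [|n IH] //; rewrite pwS size_cat IH mulSn. Qed.

Definition x1w : word Gen := [:: (i0, j0, false); (i2, j0, true)].
Definition x2w : word Gen := [:: (i0, j1, false); (i2, j1, true)].
Definition y1w : word Gen := [:: (i1, j0, false); (i2, j0, true)].
Definition y2w : word Gen := [:: (i1, j1, false); (i2, j1, true)].

Lemma inK_x1 : inK x1w. Proof. by move=> j; case: (ord2P j) => ->. Qed.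
Lemma inK_x2 : inK x2w. Proof. by move=> j; case: (ord2P j) => ->. Qed.
Lemma inK_y1 : inK y1w. Proof. by move=> j; case: (ord2P j) => ->. Qed.
Lemma inK_y2 : inK y2w. Proof. by move=> j; case: (ord2P j) => ->. Qed.

Definition Pw (S : finType) (w1 w2 w3 w4 : word S) n :=
  wcomm (pw w1 n) (pw w2 n) ++ winv (wcomm (pw w1 n) (pw w4 n)).
Definition Qw (S : finType) (w1 w2 w3 w4 : word S) n :=
  wcomm (pw w3 n) (pw w4 n) ++ winv (wcomm (pw w3 n) (pw w2 n)).
Definition un (S : finType) (w1 w2 w3 w4 : word S) n :=
  wcomm (Pw w1 w2 w3 w4 n) (Qw w1 w2 w3 w4 n).

Lemma Geq_Phi (S : finType) (gens : S -> word Gen) w v i :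
  Geq (evalw gens w) v -> freduce (Phi gens i w) = freduce (proj i v).
Proof. by move=> H; exact: (H i). Qed.

Lemma un_null (S : finType) (gens : S -> word Gen) (w1 w2 w3 w4 : word S) n :
  Geq (evalw gens w1) x1w -> Geq (evalw gens w2) x2w ->
  Geq (evalw gens w3) y1w -> Geq (evalw gens w4) y2w ->
  Geq (evalw gens (un w1 w2 w3 w4 n)) [::].
Proof.
move=> H1 H2 H3 H4 i.
rewrite /feq [proj i [::]]/= [freduce [::]]/=.
rewrite -/(Phi gens i _) /un /Pw /Qw !Phi_comm !Phi_cat !Phi_winv !Phi_comm !Phi_pw.
case: (ord3P i) => ->.
-
  have T3 : ftrivw (Phi gens i0 w3) by rewrite /ftrivw (Geq_Phi _ H3).
  have T4 : ftrivw (Phi gens i0 w4) by rewrite /ftrivw (Geq_Phi _ H4).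
  apply: ftriv_comm_r; apply: ftriv_cat.
    by apply: ftriv_comm_l; apply: ftriv_pw.
  by apply: ftriv_winv; apply: ftriv_comm_l; apply: ftriv_pw.
- have T1 : ftrivw (Phi gens i1 w1) by rewrite /ftrivw (Geq_Phi _ H1).
  have T2 : ftrivw (Phi gens i1 w2) by rewrite /ftrivw (Geq_Phi _ H2).
  apply: ftriv_comm_l; apply: ftriv_cat.
    by apply: ftriv_comm_l; apply: ftriv_pw.
  by apply: ftriv_winv; apply: ftriv_comm_l; apply: ftriv_pw.
- have E24 : freduce (Phi gens i2 w4) = freduce (Phi gens i2 w2).
    by rewrite (Geq_Phi _ H2) (Geq_Phi _ H4).
  have E13 : freduce (Phi gens i2 w3) = freduce (Phi gens i2 w1).
    by rewrite (Geq_Phi _ H1) (Geq_Phi _ H3).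
  apply: ftriv_comm_l; apply: ftriv_sub; apply: feq_pw; exact: esym E24.
Qed.

Definition vecW (a b c d : Z) : Q13 := mkQ a b 0 0 0 c d 0 0 0 0 0 0.
Definition commQ (g h : Q13) : Q13 := mulQ g (mulQ h (mulQ (negQ g) (negQ h))).
Definition Aval (n : Z) : Q13 := mkQ 0 0 (2*n*n) (6*n*n*n) (6*n*n*n) 0 0 0 0 0 0 0 0.
Definition Bval (n : Z) : Q13 := mkQ 0 0 0 0 0 0 0 (2*n*n) (6*n*n*n) (6*n*n*n) 0 0 0.

Lemma piw_x1 : piw x1w = vecW 1 0 0 0. Proof. reflexivity. Qed.
Lemma piw_x2 : piw x2w = vecW 0 1 0 0. Proof. reflexivity. Qed.
Lemma piw_y1 : piw y1w = vecW 0 0 1 0. Proof. reflexivity. Qed.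
Lemma piw_y2 : piw y2w = vecW 0 0 0 1. Proof. reflexivity. Qed.

Lemma mulQ_vecW a b c d k :
  mulQ (vecW a b c d) (vecW (k*a) (k*b) (k*c) (k*d)) = vecW ((k+1)*a) ((k+1)*b) ((k+1)*c) ((k+1)*d).
Proof. rewrite /vecW; crush_Q. Qed.

Lemma LE_pw (S : finType) (gens : S -> word Gen) w a b c d n :
  fst (LE gens w) = vecW a b c d ->
  fst (LE gens (pw w n)) = vecW (Z.of_nat n * a) (Z.of_nat n * b) (Z.of_nat n * c) (Z.of_nat n * d).
Proof.
move=> H; elim: n => [|n IH]; first by [].
rewrite pwS LE_cat fst_mulE H IH mulQ_vecW Nat2Z.inj_succ /Z.succ //.
Qed.

Lemma LE_comm (S : finType) (gens : S -> word Gen) u v :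
  LE gens (wcomm u v) = mulE (LE gens u) (mulE (LE gens v) (mulE (invE (LE gens u)) (invE (LE gens v)))).
Proof. by rewrite /wcomm !LE_cat !LE_winv. Qed.

Lemma A_val n : mulQ (commQ (vecW n 0 0 0) (vecW 0 n 0 0)) (negQ (commQ (vecW n 0 0 0) (vecW 0 0 0 n))) = Aval n.
Proof. rewrite /commQ /vecW /Aval; crush_Q. Qed.
Lemma B_val n : mulQ (commQ (vecW 0 0 n 0) (vecW 0 0 0 n)) (negQ (commQ (vecW 0 0 n 0) (vecW 0 n 0 0))) = Bval n.
Proof. rewrite /commQ /vecW /Bval; crush_Q. Qed.
Lemma AB_comm n : mulQ (Aval n) (Bval n) = mulQ (Bval n) (Aval n).
Proof. rewrite /Aval /Bval; crush_Q. Qed.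
Lemma AB_omega n : (omega (Aval n) (Bval n) - omega (Bval n) (Aval n) = 12 * n ^ 4)%Z.
Proof.
cbv [omega Aval Bval ax1 ax2 aZ aT1 aT2 bx1 bx2 bZ bT1 bT2 cZ cT1 cT2]; ring.
Qed.

Lemma un_val (S : finType) (gens : S -> word Gen) (HK : forall s, inK (gens s))
  (w1 w2 w3 w4 : word S) n :
  Geq (evalw gens w1) x1w -> Geq (evalw gens w2) x2w ->
  Geq (evalw gens w3) y1w -> Geq (evalw gens w4) y2w ->
  snd (LE gens (un w1 w2 w3 w4 n)) = (12 * (Z.of_nat n) ^ 4)%Z.
Proof.
move=> H1 H2 H3 H4.
have F : forall w v, Geq (evalw gens w) v -> fst (LE gens w) = piw v.
  by move=> w v H; rewrite (LE_fst HK w).1 (piw_Geq H).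
have F1 := F _ _ H1; rewrite piw_x1 in F1; have P1 := LE_pw n F1.
have F2 := F _ _ H2; rewrite piw_x2 in F2; have P2 := LE_pw n F2.
have F3 := F _ _ H3; rewrite piw_y1 in F3; have P3 := LE_pw n F3.
have F4 := F _ _ H4; rewrite piw_y2 in F4; have P4 := LE_pw n F4.
rewrite !Z.mul_0_r !Z.mul_1_r in P1 P2 P3 P4.
have PA : fst (LE gens (Pw w1 w2 w3 w4 n)) = Aval (Z.of_nat n).
  by rewrite /Pw LE_cat LE_winv !LE_comm !fst_mulE !fst_invE !fst_mulE !fst_invE P1 P2 P4 -A_val.
have PB : fst (LE gens (Qw w1 w2 w3 w4 n)) = Bval (Z.of_nat n).
  by rewrite /Qw LE_cat LE_winv !LE_comm !fst_mulE !fst_invE !fst_mulE !fst_invE P2 P3 P4 -B_val.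
rewrite /un LE_comm commE_val PA PB ?AB_omega //.
exact: AB_comm.
Qed.

Close Scope Z_scope.

Definition tau (S : finType) (gens : S -> word Gen) (r : word S) : Z := snd (LE gens r).
Fixpoint sumT (S : finType) (gens : S -> word Gen) (l : seq (word S * word S * bool)) : Z :=
  match l with
  | [::] => 0%Z
  | x :: l' => ((if x.2 then - tau gens x.1.2 else tau gens x.1.2) + sumT gens l')%Z
  end.

Lemma LE_conj (S : finType) (gens : S -> word Gen) (R : seq (word S))
  (HR : forall r, r \in R -> fst (LE gens r) = zeroQ) l :
  all (fun x => x.1.2 \in R) l -> LE gens (conj_prod l) = (zeroQ, sumT gens l).
Proof.
elim: l => [|[[g r] b] l IH] /=; first by [].
move=> /andP [Hr Hl].
have -> : conj_prod ((g, r, b) :: l) = (g ++ (if b then winv r else r) ++ winv g) ++ conj_prod l by [].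
have Er : LE gens r = (zeroQ, tau gens r) by rewrite -(HR r Hr) /tau -surjective_pairing.
have Eb : LE gens (if b then winv r else r) = (zeroQ, if b then (- tau gens r)%Z else tau gens r).
  by case: b; rewrite ?LE_winv Er ?invE_central.
rewrite LE_cat IH // !LE_cat LE_winv Eb conj_central central_l.
by [].
Qed.

Lemma tau_bound (S : finType) (gens : S -> word Gen) (R : seq (word S)) r :
  r \in R -> (Z.abs (tau gens r) <= Z.of_nat (sumn [seq Z.abs_nat (tau gens r) | r <- R]))%Z.
Proof.
elim: R => [|r' R IH] //=; rewrite in_cons => /orP [/eqP ->|/IH H].
  rewrite Nat2Z.inj_add Zabs2Nat.id_abs; lia.
rewrite Nat2Z.inj_add; lia.
Qed.

Lemma sumT_bound (S : finType) (gens : S -> word Gen) (R : seq (word S)) l :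
  all (fun x => x.1.2 \in R) l ->
  (Z.abs (sumT gens l) <= Z.of_nat (size l) * Z.of_nat (sumn [seq Z.abs_nat (tau gens r) | r <- R]))%Z.
Proof.
elim: l => [|x l IH]; first by move=> _; rewrite /=; lia.
move=> /andP [Hx Hl]; have := @tau_bound _ gens _ _ Hx; have := IH Hl.
have -> : sumT gens (x :: l) = ((if x.2 then - tau gens x.1.2 else tau gens x.1.2) + sumT gens l)%Z by [].
change (size (x :: l)) with (size l).+1.
rewrite Nat2Z.inj_succ Z.mul_succ_l.
generalize (Z.of_nat (size l) * Z.of_nat (sumn [seq Z.abs_nat (tau gens r) | r <- R]))%Z => P.
case: x.2; lia.
Qed.

Lemma ex_min (P : nat -> Prop) : (exists n, P n) -> exists n, P n /\ forall m, P m -> n <= m.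
Proof.
move=> [n Hn].
suff H : forall k n, n <= k -> P n -> exists n, P n /\ forall m, P m -> n <= m.
  exact: (H n n (leqnn n) Hn).
elim=> [|k IH] n0 Hk Hn0.
  exists n0; split => // m _; rewrite leqn0 in Hk; by rewrite (eqP Hk).
case: (classic (exists m, m < n0 /\ P m)) => [[m [Hm HPm]]|Hno].
  apply: (IH m) => //; lia.
exists n0; split => // m HPm; rewrite leqNgt; apply/negP => Hlt; apply: Hno; by exists m.
Qed.

Lemma Area_spec (S : finType) (R : seq (word S)) u :
  null R u -> exists l, vk_expr R u l /\ size l = Area R u.
Proof.
move=> [l0 Hl0].
have [n [[l [Hl Hs]] Hmin]] := ex_min (P := fun n => exists l, vk_expr R u l /\ size l = n) (ex_intro _ (size l0) (ex_intro _ l0 (conj Hl0 erefl))).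
have Hex : exists n, (exists l, vk_expr R u l /\ size l = n) /\ forall l, vk_expr R u l -> n <= size l.
  exists n; split; first by exists l.
  by move=> l' Hl'; apply: Hmin; exists l'.
have [[l' [Hl' Hs']] _] := epsilon_spec (inhabits 0) _ Hex.
by exists l'; split.
Qed.

Fixpoint allw (T : finType) (m : nat) : seq (seq T) :=
  match m with
  | 0 => [:: [::]]
  | m'.+1 => [::] :: [seq x :: w | x <- enum T, w <- allw T m']
  end.

Lemma allw_complete (T : finType) m (w : seq T) : size w <= m -> w \in allw T m.
Proof.
elim: m w => [|m IH] [|x w] //= Hs.
rewrite in_cons; apply/orP; right.
apply: allpairs_f; [by rewrite mem_enum | exact: IH].
Qed.

Lemma max_ex (T : eqType) (s : seq T) (P : T -> Prop) (f : T -> nat) :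
  (exists x, x \in s /\ P x) ->
  exists d, (exists x, x \in s /\ P x /\ f x = d) /\ forall x, x \in s -> P x -> f x <= d.
Proof.
elim: s => [|a s IH] [x [Hx HPx]] //.
case: (classic (exists x, x \in s /\ P x)) => [Hs|Hs].
  have [d [[y [Hy [HPy Hfy]]] Hd]] := IH Hs.
  case: (classic (P a)) => HPa.
    case: (leqP (f a) d) => Had.
      exists d; split; first by exists y; rewrite in_cons Hy orbT.
      by move=> z; rewrite in_cons => /orP [/eqP ->|/Hd]//.
    exists (f a); split; first by exists a; rewrite in_cons eqxx.
    move=> z; rewrite in_cons => /orP [/eqP -> //|Hz HPz].
    by apply: leq_trans (Hd z Hz HPz) (ltnW Had).
  exists d; split; first by exists y; rewrite in_cons Hy orbT.
  by move=> z; rewrite in_cons => /orP [/eqP -> //|/Hd].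
have HPa : P a.
  move: Hx; rewrite in_cons => /orP [/eqP <- //|Hx].
  by exfalso; apply: Hs; exists x.
exists (f a); split; first by exists a; rewrite in_cons eqxx.
move=> z; rewrite in_cons => /orP [/eqP -> //|Hz HPz].
by exfalso; apply: Hs; exists z.
Qed.

Lemma null_nil (S : finType) (R : seq (word S)) : null R [::].
Proof. by exists [::]; split. Qed.

Lemma Dehn_ge (S : finType) (R : seq (word S)) m w :
  size w <= m -> null R w -> Area R w <= Dehn R m.
Proof.
move=> Hs Hn.
have Hex : exists d, (exists w, size w <= m /\ null R w /\ Area R w = d) /\
   forall w, size w <= m -> null R w -> Area R w <= d.
  have [d [[y [_ [[Hy1 Hy2] Hy3]]] Hd]] := @max_ex _ (allw (S * bool)%type m)
     (fun w => size w <= m /\ null R w) (Area R)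
     (ex_intro _ [::] (conj (@allw_complete _ m [::] (leq0n m)) (conj (leq0n m) (null_nil R)))).
  exists d; split; first by exists y.
  by move=> z Hz Hnz; apply: Hd; [exact: allw_complete|split].
have [_ H] := epsilon_spec (inhabits 0) _ Hex.
exact: H.
Qed.

Close Scope Z_scope.

Lemma size_wcomm (A : eqType) (u v : word A) : size (wcomm u v) = 2 * (size u + size v).
Proof. rewrite /wcomm !size_cat !size_winv; lia. Qed.

Lemma size_un (S : finType) (w1 w2 w3 w4 : word S) n :
  size (un w1 w2 w3 w4 n) <= 16 * (size w1 + size w2 + size w3 + size w4) * n.
Proof.
rewrite /un /Pw /Qw size_wcomm !size_cat !size_winv !size_wcomm !size_pw; nia.
Qed.

Theorem proposition4p16 :
  forall (S : finType) (gens : S -> word Gen) (R : seq (word S)),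
    presents_K gens R ->
    dominates (Dehn R) (fun N => N ^ 4).
Proof.
move=> S gens R [HK Hsurj Hnull].
have [w1 H1] := Hsurj _ inK_x1.
have [w2 H2] := Hsurj _ inK_x2.
have [w3 H3] := Hsurj _ inK_y1.
have [w4 H4] := Hsurj _ inK_y2.
have HR : forall r, r \in R -> fst (LE gens r) = zeroQ.
  move=> r Hr.
  have Hn : null R r.
    exists [:: ([::], r, false)]; split.
      by rewrite /= Hr.
    by rewrite /feq /conj_prod /= cats0 /winv /= cats0.
  have HG := (proj2 (Hnull r)) Hn.
  by rewrite (LE_fst HK r).1 (piw_Geq HG).
set M := sumn [seq Z.abs_nat (tau gens r) | r <- R].
set L := size w1 + size w2 + size w3 + size w4.
exists (16 * L + M + 1); split; first lia.
move=> N.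
have Hn : null R (un w1 w2 w3 w4 N) by apply/(Hnull _).1; apply: un_null.
have [l [[Hall Hfeq] Hsz]] := Area_spec Hn.
have HLE : LE gens (un w1 w2 w3 w4 N) = LE gens (conj_prod l).
  by rewrite -LE_freduce -Hfeq LE_freduce.
have Hv := un_val HK N H1 H2 H3 H4.
rewrite HLE (LE_conj HR Hall) in Hv; cbn [snd] in Hv.
have Hb := @sumT_bound _ gens R l Hall.
rewrite Hv Hsz -/M in Hb.
have key : N ^ 4 <= Area R (un w1 w2 w3 w4 N) * M.
  have E4 : (Z.of_nat N ^ 4 = Z.of_nat N * Z.of_nat N * Z.of_nat N * Z.of_nat N)%Z by ring.
  move: Hb; rewrite E4; set a := Area R _; rewrite !expnS expn0 muln1; nia.
have Hs : size (un w1 w2 w3 w4 N) <= (16 * L + M + 1) * N + (16 * L + M + 1).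
  have := size_un w1 w2 w3 w4 N; rewrite -/L; nia.
have HD := Dehn_ge Hs Hn.
apply: (leq_trans key).
apply: leq_trans (_ : (16 * L + M + 1) * Dehn R ((16 * L + M + 1) * N + (16 * L + M + 1)) <= _).
  rewrite mulnC; apply: leq_mul => //; lia.
lia.
Qed.
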